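(* Let $a$ and $b$ be relatively prime integers with $1<a<b$, let $(u,v)$ be the definitely least solution of $ax+by=1$, let $S=\langle a,b\rangle$, and let $\alpha:T(S)\to I(S)$ be the bijection $\alpha(x)=F(S)-x$. Then the number of sets in the collection $\{\alpha^{-1}(I_{i,a}(S)) : i\in[1,a-1],\ I_{i,a}(S)\neq\varnothing\}$ is $|v|$.
   Context: $\langle a,b\rangle=\{\lambda_1a+\lambda_2b:\lambda_1,\lambda_2\in\mathbb{N}\}$. $F(S)$ is the largest integer not in $S$. $I(S)$ is the set of isolated gaps ($x\in\mathbb{N}\setminus S$ with $x-1,x+1\in S$). $N(S)=\{s\in S:s<F(S)\}$, $T(S)=\{s\in N(S):s-1\notin S,\ s+1\notin S\}$; since $S$ is symmetric, $x\mapsto F(S)-x$ is a bijection $T(S)\to I(S)$. For $i\in\{1,\dots,a-1\}$, $I_{i,a}(S)=\{s\in I(S):s\equiv i\pmod a\}$. The definitely least solution $(u,v)$ of $ax+by=1$ is the unique integer solution with $|u|,|v|$ minimal; equivalently the one with $|u|\le b/2$, $|v|\le a/2$. *)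

(* Defs.v *)
From mathcomp Require Import all_boot all_order all_algebra.
Set Implicit Arguments. Unset Strict Implicit. Unset Printing Implicit Defensive.

(* The search bounds l1, l2 <= s are harmless (any representation of s has
   l1, l2 <= s when a, b >= 1; and for general a,b a representation with
   l1*a + l2*b = s, a,b>0 forces l1,l2 <= s). *)
Definition inS (a b s : nat) : bool :=
  [exists l1 : 'I_s.+1, exists l2 : 'I_s.+1, (l1 * a + l2 * b == s)%N].

Definition is_frobenius (a b F : nat) : Prop :=
  ~~ inS a b F /\ (forall n, (F < n)%N -> inS a b n).

(* Sets of naturals bounded by F are represented as the increasing
   sequence of their elements taken from [0, F] (a canonical representation,
   so equality of sequences is equality of sets). *)

(* I(S): isolated gaps x notin S with x-1, x+1 in S (all gaps are <= F). *)
Definition isolated_gaps (a b F : nat) : seq nat :=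
  [seq x <- iota 0 F.+1 | [&& (0 < x)%N, ~~ inS a b x, inS a b x.-1 & inS a b x.+1]].

(* T(S) = { s in N(S) : s-1 notin S, s+1 notin S },  N(S) = { s in S : s < F }.
   For s = 0, s-1 = -1 is a negative integer, hence not in S. *)
Definition T_set (a b F : nat) : seq nat :=
  [seq s <- iota 0 F | [&& inS a b s, ((s == 0%N) || ~~ inS a b s.-1)
                         & ~~ inS a b s.+1]].

Definition I_ia (a b F i : nat) : seq nat :=
  [seq s <- isolated_gaps a b F | s == i %[mod a]].

Definition alpha (F x : nat) : nat := (F - x)%N.

Definition alpha_preimage (a b F : nat) (A : seq nat) : seq nat :=
  [seq x <- T_set a b F | alpha F x \in A].

Definition preimage_collection (a b F : nat) : seq (seq nat) :=
  undup [seq alpha_preimage a b F (I_ia a b F i)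
        | i <- iota 1 (a - 1) & I_ia a b F i != [::]].

(* Main.v *)
Require Import Defs.
From mathcomp Require Import all_boot all_order all_algebra zify.
Import GRing.Theory Num.Theory.


Lemma get_w (a b : nat) (u v : int) :
  (1 < a)%N -> (a < b)%N ->
  (a%:Z * u + b%:Z * v = 1)%R ->
  (2 * `|u| <= b)%N -> (2 * `|v| <= a)%N ->
  exists w, [/\ (b * w) %% a = 1, (0 < `|v|)%N & (w %% a = `|v|%N \/ w %% a = a - `|v|%N)].
Proof.
move=> a1 ab E hu hv.
case: u E hu => m; case: v hv => n /=; rewrite ?NegzE => hv E hu.
- have E' : (a * m + b * n = 1)%N by lia.
  clear E hu hv; case: m E' => [|m]; case: n => [|n]; rewrite ?muln0 ?add0n ?addn0 ?mulnS; lia.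
- have E' : (a * m = b * n.+1 + 1)%N by lia.
  exists (a - n.+1). split => //. 
  + have hm : (b * (a - n.+1) = (b - m) * a + 1)%N by nia.
    rewrite hm modnMDl modn_small //.
  + right; rewrite modn_small //; lia.
- have E' : (b * n = m.+1 * a + 1)%N by lia.
  exists n; split.
  + rewrite E' modnMDl modn_small //.
  + by case: n {E} E' hv => //= *; nia.
  + left; rewrite modn_small //; lia.
- lia.
Qed.


Definition lf (a w n : nat) := (n * w) %% a.

Lemma lf_cong (a b w n : nat) : (b * w) %% a = 1 -> (lf a w n * b) = n %[mod a].
Proof.
move=> bw; rewrite /lf modnMml -mulnA (mulnC w) -modnMmr bw.
by rewrite muln1.
Qed.

Lemma lf_small (a b w l : nat) : (b * w) %% a = 1 -> l < a -> lf a w (l * b) = l.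
Proof.
move=> bw la; rewrite /lf -mulnA -modnMmr bw muln1 modn_small //.
Qed.

Lemma lf_lt (a w n : nat) : 0 < a -> lf a w n < a.
Proof. by move=> a0; rewrite /lf ltn_mod. Qed.

Lemma lf_add (a w m n : nat) : lf a w (m + n) = (lf a w m + lf a w n) %% a.
Proof. by rewrite /lf mulnDl modnDm. Qed.

Lemma inS_iff (a b w n : nat) : 1 < a -> a < b -> (b * w) %% a = 1 ->
  inS a b n = (lf a w n * b <= n).
Proof.
move=> a1 ab bw; apply/idP/idP.
- case/existsP => [[l1 _]] /existsP [[l2 _]] /= /eqP E.
  have : lf a w n = l2 %% a.
    rewrite -E /lf mulnDl (mulnAC l1 a w) modnMDl -mulnA -modnMmr bw muln1 //.
  move=> ->; apply: leq_trans (leq_mul (leq_mod _ _) (leqnn b)) _.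
  by rewrite -E leq_addl.
- move=> H.
  have hc := @lf_cong a b w n bw.
  have : a %| n - lf a w n * b by rewrite -eqn_mod_dvd // hc.
  case/dvdnP => k hk.
  have kn : k < n.+1.
    rewrite ltnS; nia.
  have ln : lf a w n < n.+1.
    rewrite ltnS; nia.
  apply/existsP; exists (Ordinal kn); apply/existsP; exists (Ordinal ln) => /=.
  apply/eqP; lia.
Qed.

Lemma notinS_iff (a b w n : nat) : 1 < a -> a < b -> (b * w) %% a = 1 ->
  ~~ inS a b n = (n + a <= lf a w n * b).
Proof.
move=> a1 ab bw; rewrite (@inS_iff a b w n a1 ab bw) -ltnNge.
apply/idP/idP; last by lia.
move=> H.
have hc := @lf_cong a b w n bw.
have : a %| lf a w n * b - n by rewrite -eqn_mod_dvd ?hc // ltnW.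
case/dvdnP => k hk.
have : 0 < k by case: k hk => [|k] /=; lia.
nia.
Qed.


Lemma modcase (s a : nat) : 0 < a -> s < a + a ->
  (s < a /\ s %% a = s) \/ (a <= s /\ s %% a = s - a).
Proof.
move=> a0 h; case: (ltnP s a) => h1.
- by left; rewrite modn_small.
- right; split => //; rewrite -{1}(subnK h1) modnDr modn_small //; lia.
Qed.

Lemma lf_mod (a w n : nat) : lf a w (n %% a) = lf a w n.
Proof. by rewrite /lf modnMml. Qed.

Lemma lf_F (a b w : nat) : 1 < a -> a < b -> (b * w) %% a = 1 ->
  lf a w (a * b - a - b) = a - 1.
Proof.
move=> a1 ab bw.
have h1 : lf a w (a * b - a - b + b) = 0.
  have -> : a * b - a - b + b = (b - 1) * a by nia.
  by rewrite /lf mulnAC modnMl.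
have lb : lf a w b = 1 by exact: bw.
move: h1; rewrite lf_add lb.
have := @lf_lt a w (a * b - a - b) (ltnW a1).
set x := lf a w _ => xa.
case: (@modcase (x + 1) a (ltnW a1) ltac:(lia)); lia.
Qed.

Lemma F_eq (a b w F : nat) : 1 < a -> a < b -> (b * w) %% a = 1 ->
  is_frobenius a b F -> F = a * b - a - b.
Proof.
move=> a1 ab bw [hF hgt].
have n0 : ~~ inS a b (a * b - a - b).
  rewrite (@notinS_iff a b w _ a1 ab bw) lf_F //.
  nia.
have big : forall n, a * b - a - b < n -> inS a b n.
  move=> n hn; case h: (inS a b n) => //; move/negbT: h; rewrite (@notinS_iff a b w _ a1 ab bw) => h.
  have := @lf_lt a w n (ltnW a1); nia.
case: (ltngtP F (a * b - a - b)) => // h.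
- by move: n0; rewrite hgt.
- by move: hF; rewrite big.
Qed.

Lemma sym (a b w n : nat) : 1 < a -> a < b -> (b * w) %% a = 1 ->
  n <= a * b - a - b -> inS a b (a * b - a - b - n) = ~~ inS a b n.
Proof.
move=> a1 ab bw hn.
have hs : lf a w n + lf a w (a * b - a - b - n) = a - 1.
  have := @lf_F a b w a1 ab bw.
  rewrite -{1}(subnKC hn) lf_add.
  have := @lf_lt a w n (ltnW a1); have := @lf_lt a w (a * b - a - b - n) (ltnW a1).
  set x := lf a w n; set y := lf a w _ => ya xa.
  case: (@modcase (x + y) a (ltnW a1) ltac:(lia)); lia.
rewrite (@inS_iff a b w _ a1 ab bw) (@notinS_iff a b w _ a1 ab bw).
have -> : lf a w n = a - 1 - lf a w (a * b - a - b - n) by lia.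
have := @lf_lt a w (a * b - a - b - n) (ltnW a1).
set y := lf a w _ => ya.
rewrite !mulnBl mul1n; apply/idP/idP; nia.
Qed.


Lemma mem_gaps (a b F x : nat) : (x \in isolated_gaps a b F) =
  [&& x <= F, 0 < x, ~~ inS a b x, inS a b x.-1 & inS a b x.+1].
Proof. by rewrite /isolated_gaps mem_filter mem_iota add0n ltnS andbC -!andbA. Qed.

Lemma mem_T (a b F x : nat) : (x \in T_set a b F) =
  [&& x < F, inS a b x, ((x == 0) || ~~ inS a b x.-1) & ~~ inS a b x.+1].
Proof. by rewrite /T_set mem_filter mem_iota add0n andbC -!andbA. Qed.

Ltac clear_mods := repeat match goal with H : context [modn _ _] |- _ => clear H end.

Lemma gapA (a b w c x : nat) : 1 < a -> a < b -> (b * w) %% a = 1 ->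
  0 < c -> c + c <= a -> (w %% a = c \/ w %% a = a - c) ->
  0 < x -> ~~ inS a b x -> inS a b x.-1 -> inS a b x.+1 ->
  a - c <= lf a w x.
Proof.
move=> a1 ab bw c0 c2 hd x0 h0 hm hp.
have ex : x = x.-1 + 1 by lia.
have hL := @lf_lt a w x (ltnW a1).
have hL' := @lf_lt a w x.-1 (ltnW a1).
have hL'' := @lf_lt a w x.+1 (ltnW a1).
have l1 : lf a w 1 = w %% a by rewrite /lf mul1n.
have e1 : lf a w x = (lf a w x.-1 + w %% a) %% a by rewrite {1}ex lf_add l1.
have e2 : lf a w x.+1 = (lf a w x + w %% a) %% a by rewrite -addn1 lf_add l1.
move: h0 hm hp.
rewrite (@notinS_iff a b w _ a1 ab bw) !(@inS_iff a b w _ a1 ab bw) => h0 hm hp.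
have lt1 : lf a w x.-1 < lf a w x.
  rewrite -(ltn_pmul2r (ltn_trans (ltnW a1) ab)); lia.
have lt2 : lf a w x.+1 < lf a w x.
  rewrite -(ltn_pmul2r (ltn_trans (ltnW a1) ab)); lia.
move: e1 e2 lt1 lt2 hL hL' hL''.
set L := lf a w x; set L' := lf a w x.-1; set L'' := lf a w x.+1.
have wa : w %% a < a by rewrite ltn_mod; lia.
move: wa; set d := w %% a => wa e1 e2 lt1 lt2 hL hL' hL''.
case: (@modcase (L' + d) a (ltnW a1) ltac:(lia)) => [[u1 u2]|[u1 u2]];
case: (@modcase (L + d) a (ltnW a1) ltac:(lia)) => [[v1 v2]|[v1 v2]]; lia.
Qed.

Lemma gapB (a b w c L : nat) : 1 < a -> a < b -> (b * w) %% a = 1 ->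
  0 < c -> c + c <= a -> (w %% a = c \/ w %% a = a - c) ->
  a - c <= L -> L < a ->
  let x := L * b - a in
  [/\ lf a w x = L, 0 < x, ~~ inS a b x, inS a b x.-1 & inS a b x.+1].
Proof.
move=> a1 ab bw c0 c2 hd hL La x.
have Lb : a < L * b.
  apply: leq_trans ab _; rewrite leq_pmull //; lia.
have xa : x + a = L * b by rewrite /x subnK // ltnW.
have lx : lf a w x = L.
  have : lf a w (x + a) = L by rewrite xa (@lf_small a b w L bw La).
  have la : lf a w a = 0 by rewrite /lf modnMr.
  by rewrite lf_add la addn0 /lf modn_mod.
have x0 : 0 < x by rewrite /x subn_gt0.
have ex : x = x.-1 + 1 by rewrite addn1 prednK.
have hL' := @lf_lt a w x.-1 (ltnW a1).
have hL'' := @lf_lt a w x.+1 (ltnW a1).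
have l1 : lf a w 1 = w %% a by rewrite /lf mul1n.
have e1 : lf a w x = (lf a w x.-1 + w %% a) %% a by rewrite {1}ex lf_add l1.
have e2 : lf a w x.+1 = (lf a w x + w %% a) %% a by rewrite -addn1 lf_add l1.
rewrite (@notinS_iff a b w _ a1 ab bw) !(@inS_iff a b w _ a1 ab bw) lx.
split => //; first by clear_mods; lia.
- rewrite lx in e1.
  have wa : w %% a < a by rewrite ltn_mod; lia.
  move: e1 hL' wa hd; set L' := lf a w x.-1; set d := w %% a => e1 hL' wa hd.
  have : L' < L.
    case: (@modcase (L' + d) a (ltnW a1) ltac:(lia)) => [[u1 u2]|[u1 u2]].
    + rewrite u2 in e1; clear_mods; lia.
    + rewrite u2 in e1; clear_mods; lia.
  move=> lt; have : L' * b <= L * b - b.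
    have h : L' <= L - 1 by clear_mods; lia.
    by have := leq_mul h (leqnn b); rewrite mulnBl mul1n.
  clear_mods; lia.
- rewrite lx in e2.
  have wa : w %% a < a by rewrite ltn_mod; lia.
  move: e2 hL'' wa hd; set L'' := lf a w x.+1; set d := w %% a => e2 hL'' wa hd.
  have : L'' < L.
    case: (@modcase (L + d) a (ltnW a1) ltac:(lia)) => [[u1 u2]|[u1 u2]]; rewrite u2 in e2; clear_mods; lia.
  move=> lt; have : L'' * b <= L * b - b.
    have h : L'' <= L - 1 by clear_mods; lia.
    by have := leq_mul h (leqnn b); rewrite mulnBl mul1n.
  clear_mods; lia.
Qed.


Lemma gap_T (a b w y : nat) : 1 < a -> a < b -> (b * w) %% a = 1 ->
  y \in isolated_gaps a b (a * b - a - b) -> (a * b - a - b) - y \in T_set a b (a * b - a - b).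
Proof.
move=> a1 ab bw; rewrite mem_gaps mem_T => /and5P [yF y0 h0 hm hp].
set F := a * b - a - b in yF *.
have sy := @sym a b w _ a1 ab bw yF.
rewrite sy h0 /=.
apply/and3P; split.
- lia.
- case: (ltnP y F) => hy; last by (have -> : F - y = 0 by lia).
  have -> : (F - y).-1 = F - y.+1 by lia.
  by rewrite (@sym a b w _ a1 ab bw hy) hp orbT.
- have -> : (F - y).+1 = F - y.-1 by lia.
  by rewrite (@sym a b w y.-1 a1 ab bw (leq_trans (leq_pred y) yF)) hm.
Qed.


Theorem lemma3p8 (a b : nat) (u v : int) (F : nat) :
  (1 < a)%N -> (a < b)%N -> coprime a b ->
  (a%:Z * u + b%:Z * v = 1)%R ->
  (2 * `|u| <= b)%N -> (2 * `|v| <= a)%N ->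
  is_frobenius a b F ->
  size (preimage_collection a b F) = `|v|%N.
Proof.
move=> a1 ab cop E hu hv hF.
have [w [bw c0 hd]] := @get_w a b u v a1 ab E hu hv.
have c2 : (`|v| + `|v| <= a)%N by lia.
move: c0 hd c2; set c := `|v|%N => c0 hd c2.
have Fe := @F_eq a b w F a1 ab bw hF.
subst F.
set F := (a * b - a - b)%N in hF *.
have hF2 := hF.2.
rewrite /preimage_collection.
set P := fun i => I_ia a b F i != [::].
set g := fun L => (L * b) %% a.
have memP : [seq i <- iota 1 (a - 1) | P i] =i [seq g L | L <- iota (a - c) c].
  move=> i; rewrite mem_filter mem_iota /P /I_ia -has_filter.
  apply/idP/idP.
  - case/andP=> /hasP [y yg /eqP yi] /andP [i1 ia].
    move: (yg); rewrite mem_gaps => /and5P [yF y0 h0 hm hp].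
    have hl := @gapA a b w c y a1 ab bw c0 c2 hd y0 h0 hm hp.
    have ll := @lf_lt a w y (ltnW a1).
    apply/mapP; exists (lf a w y).
      by rewrite mem_iota; apply/andP; split; [done| clear_mods; lia].
    rewrite /g (@lf_cong a b w y bw) yi modn_small //; lia.
  - case/mapP => L; rewrite mem_iota => /andP [h1 h2] ->.
    have La : (L < a)%N by lia.
    have hL : (a - c <= L)%N by lia.
    have [lx x0 h0 hm hp] := @gapB a b w c L a1 ab bw c0 c2 hd hL La.
    apply/andP; split.
    + apply/hasP; exists (L * b - a)%N.
        rewrite mem_gaps x0 h0 hm hp !andbT.
        rewrite leqNgt; apply/negP => /hF2; by rewrite (negbTE h0).
      by rewrite /g -{2}lx (@lf_cong a b w _ bw) modn_mod.
    + apply/andP; split; last by rewrite /g; have := ltn_mod (L * b) a; lia.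
      rewrite lt0n; apply/eqP => g0.
      have := @lf_small a b w L bw La.
      rewrite -lf_mod -/(g L) g0 /lf mul0n mod0n => L0.
      lia.
have us : uniq [seq i <- iota 1 (a - 1) | P i] by rewrite filter_uniq // iota_uniq.
have ut : uniq [seq g L | L <- iota (a - c) c].
  rewrite map_inj_in_uniq ?iota_uniq // => L1 L2; rewrite !mem_iota => h1 h2 e.
  have := @lf_small a b w L1 bw ltac:(lia).
  have := @lf_small a b w L2 bw ltac:(lia).
  by rewrite -(lf_mod _ _ (L1 * b)) -(lf_mod _ _ (L2 * b)) -/(g L1) -/(g L2) e => -> ->.
have inj : {in [seq i <- iota 1 (a - 1) | P i] &,
    injective (fun i => alpha_preimage a b F (I_ia a b F i))}.
  move=> i j; rewrite !mem_filter !mem_iota /P /I_ia -!has_filter.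
  move=> /andP [/hasP [y yg /eqP yi] hi] /andP [_ hj] E'.
  have Ty := @gap_T a b w y a1 ab bw yg.
  have yF : (y <= F)%N by move: yg; rewrite mem_gaps => /andP [].
  have : (F - y)%N \in alpha_preimage a b F (I_ia a b F i).
    by rewrite mem_filter Ty andbT /alpha subKn // mem_filter yg andbT yi.
  rewrite E' mem_filter /alpha subKn // mem_filter => /andP [/andP [/eqP yj _] _].
  move: yi; rewrite yj !modn_small //; lia.
rewrite undup_id; last by rewrite (map_inj_in_uniq inj).
by rewrite size_map (perm_size (uniq_perm us ut memP)) size_map size_iota.
Qed.
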